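(* Let $$\Delta t_{\mathrm{CFL}}=\frac{2}{\frac{2\hbar}{m}\left(\frac{1}{(\Delta x)^2}+\frac{1}{(\Delta y)^2}+\frac{1}{(\Delta z)^2}\right)+\frac{\max_{i,j,k}|U_{i,j,k}|}{\hbar}}$$ and $$\Delta t_{\mathrm{CFL,gen}}=\frac{2}{\rho\!\left(\frac{1}{\hbar}(D_V'')^{-1/2}H(D_V'')^{-1/2}\right)},$$ where $\rho(\cdot)$ is the spectral radius. Then $\Delta t_{\mathrm{CFL}}\le\Delta t_{\mathrm{CFL,gen}}$.
   Context: Fix constants $\hbar>0$, $m>0$, cell sizes $\Delta x,\Delta y,\Delta z>0$ and positive integers $n_x,n_y,n_z$. The region is a box of $n_x\times n_y\times n_z$ primary cells of size $\Delta x\times\Delta y\times\Delta z$ with primary nodes $(i,j,k)$, $1\le i\le n_x+1$, $1\le j\le n_y+1$, $1\le k\le n_z+1$. Let $N=(n_x+1)(n_y+1)(n_z+1)$; node-indexed vectors use the ordering $i+(j-1)(n_x+1)+(k-1)(n_x+1)(n_y+1)$. Real potential values $U_{i,j,k}$ are given at the nodes; $D_U$ is the $N\times N$ diagonal matrix containing them. Let $I_p$ be the $p\times p$ identity, $\tilde I_p=\mathrm{diag}(\tfrac12,1,\dots,1,\tfrac12)$ ($p\times p$), $W_p=[0_{p\times1}\ I_p]-[I_p\ 0_{p\times 1}]$ ($p\times(p+1)$), $\otimes$ the Kronecker product. Define $D_V''=\Delta x\Delta y\Delta z\,\tilde I_{n_z+1}\otimes\tilde I_{n_y+1}\otimes\tilde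 I_{n_x+1}$; $D=[D_x\ D_y\ D_z]$ with $D_x=-I_{n_z+1}\otimes I_{n_y+1}\otimes W_{n_x}^T$, $D_y=-I_{n_z+1}\otimes W_{n_y}^T\otimes I_{n_x+1}$, $D_z=-W_{n_z}^T\otimes I_{n_y+1}\otimes I_{n_x+1}$; $D_S''=\mathrm{diag}(\Delta y\Delta z\,\tilde I_{n_z+1}\otimes\tilde I_{n_y+1}\otimes I_{n_x},\ \Delta x\Delta z\,\tilde I_{n_z+1}\otimes I_{n_y}\otimes\tilde I_{n_x+1},\ \Delta x\Delta y\,I_{n_z}\otimes\tilde I_{n_y+1}\otimes\tilde I_{n_x+1})$; $D_l'=\mathrm{diag}(\Delta x\, I_{n_x(n_y+1)(n_z+1)},\ \Delta y\, I_{(n_x+1)n_y(n_z+1)},\ \Delta z\, I_{(n_x+1)(n_y+1)n_z})$; $H=\frac{\hbar^2}{2m}D D_S''(D_l')^{-1}D^T+D_V''D_U$. *)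

(* Defs.v *)
From HB Require Import structures.
From mathcomp Require Import all_boot all_order all_algebra.
From mathcomp.real_closed Require Import complex mxtens.
Set Implicit Arguments. Unset Strict Implicit. Unset Printing Implicit Defensive.
Import Order.TTheory GRing.Theory Num.Theory.
Local Open Scope ring_scope.

Section Defs.
Variable R : rcfType.

(* spectral radius: max modulus of the (complex) eigenvalues, i.e. of the roots
   (with multiplicity) of the characteristic polynomial of A seen over R[i]. *)
Definition spectral_radius n (A : 'M[R]_n) : R :=
  \big[Num.max/0]_(z <- sval (closed_field_poly_normal
                        (char_poly (map_mx (real_complex R) A))))
     Normc.normc z.

Definition tI (p : nat) : 'M[R]_p :=
  diag_mx (\row_(i < p) if ((i == 0%N :> nat) || (i == p.-1 :> nat))
                        then (2%:R)^-1 else 1).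

Definition W (p : nat) : 'M[R]_(p, p.+1) :=
  row_mx (0 : 'M[R]_(p, 1)) (1%:M : 'M[R]_p)
  - castmx (erefl p, addn1 p) (row_mx (1%:M : 'M[R]_p) (0 : 'M[R]_(p, 1))).

Variables (hbar m dx dy dz : R) (nx ny nz : nat).
Variable U : 'I_nx.+1 -> 'I_ny.+1 -> 'I_nz.+1 -> R.
(* U i j k is U_{i+1,j+1,k+1} in the paper's 1-based indexing *)

Local Notation N := (nz.+1 * (ny.+1 * nx.+1))%N.

Definition DV : 'M[R]_N := (dx * dy * dz) *: (tI nz.+1 *t (tI ny.+1 *t tI nx.+1)).

(* node l (0-based) = i + j (nx+1) + k (nx+1)(ny+1) *)
Definition DU : 'M[R]_N :=
  diag_mx (\row_(l < N) U (inord (l %% nx.+1)) (inord ((l %/ nx.+1) %% ny.+1))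
                          (inord (l %/ (ny.+1 * nx.+1)))).

Definition Dx : 'M[R]_(N, nz.+1 * (ny.+1 * nx)) :=
  - ((1%:M : 'M[R]_nz.+1) *t ((1%:M : 'M[R]_ny.+1) *t (W nx)^T)).
Definition Dy : 'M[R]_(N, nz.+1 * (ny * nx.+1)) :=
  - ((1%:M : 'M[R]_nz.+1) *t ((W ny)^T *t (1%:M : 'M[R]_nx.+1))).
Definition Dz : 'M[R]_(N, nz * (ny.+1 * nx.+1)) :=
  - ((W nz)^T *t ((1%:M : 'M[R]_ny.+1) *t (1%:M : 'M[R]_nx.+1))).

Definition D := row_mx Dx (row_mx Dy Dz).

Definition DS :=
  block_mx ((dy * dz) *: (tI nz.+1 *t (tI ny.+1 *t (1%:M : 'M[R]_nx)))) 0 0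
   (block_mx ((dx * dz) *: (tI nz.+1 *t ((1%:M : 'M[R]_ny) *t tI nx.+1))) 0 0
             ((dx * dy) *: ((1%:M : 'M[R]_nz) *t (tI ny.+1 *t tI nx.+1)))).

Definition Dl :=
  block_mx (dx *: (1%:M : 'M[R]_(nz.+1 * (ny.+1 * nx)))) 0 0
   (block_mx (dy *: (1%:M : 'M[R]_(nz.+1 * (ny * nx.+1)))) 0 0
             (dz *: (1%:M : 'M[R]_(nz * (ny.+1 * nx.+1))))).

Definition H : 'M[R]_N :=
  (hbar ^+ 2 / (2%:R * m)) *: (D *m DS *m invmx Dl *m D^T) + DV *m DU.

Definition DVmhalf : 'M[R]_N :=
  \matrix_(a, b) if a == b then (Num.sqrt (DV a a))^-1 else 0.

Definition dt_CFL_gen : R :=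
  2%:R / spectral_radius (hbar^-1 *: (DVmhalf *m H *m DVmhalf)).

Definition maxU : R :=
  \big[Num.max/0]_(i < nx.+1) \big[Num.max/0]_(j < ny.+1)
     \big[Num.max/0]_(k < nz.+1) `|U i j k|.

Definition dt_CFL : R :=
  2%:R / ((2%:R * hbar / m) * (dx ^+ 2)^-1 + (2%:R * hbar / m) * (dy ^+ 2)^-1
          + (2%:R * hbar / m) * (dz ^+ 2)^-1 + maxU / hbar).
End Defs.

(* Main.v *)
Require Import Defs.
From HB Require Import structures.
From mathcomp Require Import all_boot all_order all_algebra.
From mathcomp.real_closed Require Import complex mxtens.
From mathcomp Require Import zify ring lra.
Import Order.TTheory GRing.Theory Num.Theory.
Local Open Scope ring_scope.

Section Spec.
Variable R : rcfType.
Local Notation C := (R[i]).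
Local Notation normc := (@Normc.normc R).

Lemma normc_ge0 (z : C) : 0 <= normc z.
Proof. by case: z => a b; rewrite /Normc.normc sqrtr_ge0. Qed.

Lemma normc_real (r : R) : normc (r%:C)%C = `|r|.
Proof. by rewrite /Normc.normc /= expr0n /= addr0 sqrtr_sqr. Qed.

Lemma normc_sum I (s : seq I) (P : pred I) (F : I -> C) :
  normc (\sum_(i <- s | P i) F i) <= \sum_(i <- s | P i) normc (F i).
Proof.
elim/big_rec2: _ => [|i a b _ IH]; first by rewrite Normc.normc0.
exact: le_trans (le_normcD _ _) (lerD (lexx _) IH).
Qed.

Lemma gersh n (B : 'M[R]_n) (z : C) (w : 'rV[C]_n) (b : R) :
  w != 0 -> w *m map_mx (real_complex R) B = z *: w ->
  (forall j, \sum_i `|B i j| <= b) -> normc z <= b.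
Proof.
move=> w0 eq hb.
have [j0 wj0] : exists j0, w 0 j0 != 0.
  apply/existsP; apply: contraR w0 => /existsPn H.
  by apply/eqP/matrixP => k j; rewrite [k]ord1 mxE; apply/eqP/negPn/H.
pose F j := normc (w 0 j).
case: (@arg_maxP _ _ _ j0 xpredT F isT) => j _ Hj.
have Fj : 0 < F j.
  rewrite lt_def normc_ge0 andbT; apply/eqP => /Normc.eq0_normc wj.
  have := Hj j0 isT; rewrite /F wj Normc.normc0 => H.
  have : normc (w 0 j0) = 0 by apply/eqP; rewrite eq_le normc_ge0 andbT; exact: H.
  by move/Normc.eq0_normc/eqP; rewrite (negPf wj0).
have e : z * w 0 j = \sum_i w 0 i * (B i j)%:C%C.
  by have := congr1 (fun M : 'rV[C]_n => M 0 j) eq; rewrite !mxE => <-; apply: eq_bigr => i _; rewrite mxE.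
have : normc z * F j <= F j * b.
  rewrite /F -Normc.normcM e.
  have := normc_sum _ (index_enum _) xpredT (fun i => w 0 i * (B i j)%:C%C).
  move=> /le_trans; apply.
  apply: (@le_trans _ _ (F j * \sum_i `|B i j|)); last by rewrite ler_pM2l // hb.
  rewrite mulr_sumr.
  apply: ler_sum => i _; rewrite Normc.normcM normc_real.
  by rewrite ler_wpM2r //; exact: Hj.
by rewrite mulrC ler_pM2l.
Qed.

Lemma specrad_le n (A B S : 'M[R]_n) b :
  S \in unitmx -> A *m S = S *m B -> (forall j, \sum_i `|B i j| <= b) -> 0 <= b ->
  spectral_radius A <= b.
Proof.
move=> uS AS hb b0; rewrite /spectral_radius.
case: closed_field_poly_normal => r /= Hr.
rewrite big_seq; apply: bigmax_le => // z zr.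
have rz : root (char_poly (map_mx (real_complex R) A)) z.
  rewrite Hr rootZ; last by rewrite lead_coef_eq0 monic_neq0 // char_poly_monic.
  by rewrite root_prod_XsubC.
rewrite -eigenvalue_root_char in rz.
case/eigenvalueP: rz => v vA v0.
pose f := real_complex R.
apply: (@gersh n B z (v *m map_mx f S) b) => //.
  apply: contra v0 => /eqP w0.
  have uSc : map_mx f S \in unitmx by rewrite map_unitmx.
  by rewrite -[v](mulmxK uSc) w0 mul0mx.
by rewrite -mulmxA -map_mxM -AS map_mxM mulmxA vA scalemxAl.
Qed.

Lemma sym_sq0 n (M : 'M[R]_n) : M^T = M -> M *m M = 0 -> M = 0.
Proof.
move=> sM MM; apply/matrixP => i j; rewrite mxE.
have : (M *m M) i i = 0 by rewrite MM mxE.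
rewrite mxE => /eqP; rewrite psumr_eq0 => [/allP /(_ j) H|k _].
  have : M i j * M j i == 0 by apply: H; rewrite mem_index_enum.
  by rewrite -{2}sM mxE -expr2 sqrf_eq0 => /eqP.
by rewrite -{2}sM mxE -expr2 sqr_ge0.
Qed.

Lemma sym_expT n (M : 'M[R]_n) k : M^T = M -> (M ^+ k)^T = M ^+ k.
Proof.
move=> sM; elim: k => [|k IH]; first by rewrite !expr0 trmx1.
by rewrite exprS -mulmxE trmx_mul IH sM mulmxE -exprSr exprS.
Qed.

Lemma sym_pow0 n (M : 'M[R]_n) k : M^T = M -> M ^+ k = 0 -> M = 0.
Proof.
move=> sM; elim: k {-2}k (leqnn k) => [|K IH] k.
  rewrite leqn0 => /eqP -> /=; rewrite expr0 => h.
  by rewrite -[M]mulr1 h mulr0.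
rewrite leq_eqVlt => /orP [/eqP -> Mk|]; last by rewrite ltnS; apply: IH.
case: K IH Mk => [|K] IH Mk; first by rewrite expr1 in Mk.
apply: (IH K.+1./2.+1); first by rewrite -divn2; lia.
apply: sym_sq0; first exact: sym_expT.
apply/eqP; rewrite mulmxE -expr2 -exprM.
have hk : (K.+2 <= K.+1./2.+1 * 2)%N by rewrite -divn2; lia.
by rewrite -(subnK hk) exprD Mk mulr0.
Qed.

Lemma specrad_pos n (A : 'M[R]_n) : A^T = A -> A != 0 -> 0 < spectral_radius A.
Proof.
move=> sA; apply: contraR; rewrite -leNgt => H; apply/eqP.
move: H; rewrite /spectral_radius.
case: closed_field_poly_normal => r /= Hr Hle.
have z0 : forall z, z \in r -> z = 0.
  move=> z zr; apply: Normc.eq0_normc; apply/eqP; rewrite eq_le normc_ge0 andbT.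
  apply: le_trans Hle; exact: (le_bigmax_seq _ _ xpredT).
have Hp : \prod_(z <- r) ('X - z%:P) = 'X^(size r) :> {poly R[i]}.
  elim: r z0 {Hr Hle} => [|a r IH] z0; first by rewrite big_nil expr0.
  rewrite big_cons IH => [|z zr]; last by apply: z0; rewrite in_cons zr orbT.
  by rewrite (z0 a (mem_head _ _)) subr0 exprS.
rewrite Hp (monicP (char_poly_monic _)) scale1r in Hr.
have Hc : char_poly A = 'X^(size r).
  apply: (@map_poly_inj _ _ (real_complex R)).
  by rewrite map_char_poly Hr map_polyXn.
case: n A sA Hc {Hr} => [|n'] A sA Hc; first by apply/matrixP => i; case: i.
apply: (@sym_pow0 _ A (size r)) => //.
by have := Cayley_Hamilton A; rewrite Hc rmorphXn /= horner_mx_X.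
Qed.
End Spec.

Set Implicit Arguments. Unset Strict Implicit. Unset Printing Implicit Defensive.

Section Conc.
Variable R : rcfType.

Definition tw (p : nat) (a : 'I_p) : R :=
  if ((a == 0%N :> nat) || (a == p.-1 :> nat)) then (2%:R)^-1 else 1.

Lemma tw_gt0 p (a : 'I_p) : 0 < tw a.
Proof. by rewrite /tw; case: ifP => _; rewrite ?invr_gt0 ?ltr0n. Qed.

Lemma tIE p a b : tI R p a b = tw a *+ (a == b).
Proof. by rewrite /tI mxE mxE. Qed.

Lemma tI_sym p : (tI R p)^T = tI R p.
Proof. exact: tr_diag_mx. Qed.

Lemma W1E p (k : 'I_p) (j : 'I_p.+1) :
  (row_mx (0 : 'M[R]_(p, 1)) (1%:M : 'M[R]_p)) k j = ((j : nat) == k.+1)%:R.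
Proof.
case: (@splitP 1 p j) => j1 e.
  have -> : j = lshift p j1 by apply: val_inj.
  by rewrite row_mxEl mxE [j1]ord1.
have -> : j = rshift 1 j1 by apply: val_inj.
by rewrite row_mxEr mxE /= add1n eqSS eq_sym.
Qed.

Lemma W2E p (k : 'I_p) (j : 'I_p.+1) :
  (castmx (erefl p, addn1 p) (row_mx (1%:M : 'M[R]_p) (0 : 'M[R]_(p, 1)))) k j
   = ((j : nat) == k)%:R.
Proof.
rewrite castmxE /=.
case: (splitP (cast_ord (esym (addn1 p)) j)) => j1 e.
  have -> : cast_ord (esym (addn1 p)) j = lshift 1 j1 by apply: val_inj.
  by rewrite row_mxEl mxE -val_eqE /= -e eq_sym.
have -> : cast_ord (esym (addn1 p)) j = rshift p j1 by apply: val_inj.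
rewrite row_mxEr mxE /=; move: e => /= e.
have jp : (j : nat) = p by rewrite e [j1]ord1 addn0.
by have := ltn_ord k; rewrite jp; case: eqP => //; lia.
Qed.

Lemma WE p (k : 'I_p) (j : 'I_p.+1) :
  W R p k j = ((j : nat) == k.+1)%:R - ((j : nat) == k)%:R.
Proof. by rewrite /W mxE W1E mxE W2E. Qed.

Definition colsum m n (M : 'M[R]_(m, n)) (j : 'I_n) := \sum_i `|M i j|.

Lemma colsum_ge0 m n (M : 'M[R]_(m, n)) j : 0 <= colsum M j.
Proof. by apply: sumr_ge0 => i _. Qed.

Lemma colsumD m n (A B : 'M[R]_(m, n)) j : colsum (A + B) j <= colsum A j + colsum B j.
Proof. by rewrite /colsum -big_split /=; apply: ler_sum => i _; rewrite mxE ler_normD. Qed.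

Lemma colsumZ m n a (A : 'M[R]_(m, n)) j : colsum (a *: A) j = `|a| * colsum A j.
Proof. by rewrite /colsum mulr_sumr; apply: eq_bigr => i _; rewrite mxE normrM. Qed.

Lemma colsum_tens m n p q (A : 'M[R]_(m, n)) (B : 'M[R]_(p, q)) j :
  colsum (A *t B) j = colsum A (mxtens_unindex j).1 * colsum B (mxtens_unindex j).2.
Proof.
rewrite /colsum mulr_sum; apply: eq_bigr => i _; by rewrite mxE normrM.
Qed.

Lemma colsum_tI p (j : 'I_p) : colsum (tI R p) j = tw j.
Proof.
rewrite /colsum (bigD1 j) //= big1 ?addr0 => [|i /negPf ij]; last by rewrite tIE ij mulr0n normr0.
by rewrite tIE eqxx mulr1n ger0_norm // ltW // tw_gt0.
Qed.

Lemma sum_ind n a : \sum_(r < n) (((r : nat) == a)%:R : R) = (a < n)%:R.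
Proof.
case: (ltnP a n) => h.
  rewrite (bigD1 (Ordinal h)) //= eqxx big1 ?addr0 // => r.
  by rewrite -val_eqE /= => /negPf ->.
rewrite big1 // => r _; suff -> : ((r : nat) == a) = false by [].
by apply/negbTE; rewrite neq_ltn (leq_trans (ltn_ord r) h).
Qed.

Lemma normW p (k : 'I_p) (j : 'I_p.+1) :
  `|W R p k j| <= ((j : nat) == k.+1)%:R + ((j : nat) == k)%:R.
Proof. by rewrite WE; apply: le_trans (ler_normB _ _) _; rewrite !normr_nat. Qed.

Lemma rowsumW p (k : 'I_p) : \sum_j `|W R p k j| <= 2%:R.
Proof.
apply: (@le_trans _ _ (\sum_(j < p.+1) ((((j:nat) == k.+1)%:R : R) + ((j:nat) == k)%:R))).
  by apply: ler_sum => j _; exact: normW.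
rewrite big_split /= !sum_ind -natrD ler_nat.
by have := ltn_ord k; case: (k.+1 < p.+1)%N; case: (k < p.+1)%N.
Qed.

Lemma colsumW p (i : 'I_p.+1) :
  \sum_k `|W R p k i| <= ((0 < i)%N)%:R + ((i < p)%N)%:R.
Proof.
apply: (@le_trans _ _ (\sum_(k < p) ((((i:nat) == k.+1)%:R : R) + ((i:nat) == k)%:R))).
  by apply: ler_sum => k _; exact: normW.
rewrite big_split /= [X in _ + X](eq_bigr (fun k : 'I_p => (((k : nat) == i)%:R : R))) => [|k _]; last by rewrite eq_sym.
rewrite sum_ind lerD2r.
case: (posnP i) => [i0|ipos].
  by rewrite i0 big1 // => k _; rewrite i0.
rewrite (eq_bigr (fun k : 'I_p => (((k : nat) == i.-1)%:R : R))) => [|k _].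
  by rewrite sum_ind ler_nat; case: (_ < _)%N.
by congr (_%:R); apply/eqP/eqP; lia.
Qed.

Lemma colsumL p (i : 'I_p.+1) : (0 < p)%N ->
  colsum ((W R p)^T *m W R p) i <= 4%:R * tw i.
Proof.
move=> p0.
have h1 : colsum ((W R p)^T *m W R p) i <= \sum_k `|W R p k i| * 2%:R.
  rewrite /colsum.
  apply: (@le_trans _ _ (\sum_r \sum_k `|W R p k r| * `|W R p k i|)).
    apply: ler_sum => r _; rewrite mxE; apply: le_trans (ler_norm_sum _ _ _) _.
    by apply: ler_sum => k _; rewrite mxE normrM.
  rewrite exchange_big /=; apply: ler_sum => k _.
  by rewrite -mulr_suml mulrC ler_wpM2l // rowsumW.
apply: le_trans h1 _; rewrite -mulr_suml.
apply: le_trans (ler_wpM2r _ (colsumW i)) _ => //.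
rewrite /tw /=; have [i0|i0] := eqVneq (i : nat) 0%N.
  rewrite i0 p0 /= add0r mul1r; lra.
have [ip|ip] := eqVneq (i : nat) p.
  rewrite ip ltnn lt0n -ip i0 /= addr0 mul1r; lra.
have -> : (0 < i)%N by rewrite lt0n.
have -> : (i < p)%N by have := ltn_ord i; lia.
rewrite /= mulr1; lra.
Qed.
End Conc.

Section Main.
Variables (R : rcfType) (hbar m dx dy dz : R) (nx ny nz : nat).
Variable U : 'I_nx.+1 -> 'I_ny.+1 -> 'I_nz.+1 -> R.
Hypotheses (hh : 0 < hbar) (hm : 0 < m) (hx : 0 < dx) (hy : 0 < dy) (hz : 0 < dz).
Hypotheses (px : (0 < nx)%N) (py : (0 < ny)%N) (pz : (0 < nz)%N).

Local Notation L p := ((W R p)^T *m W R p).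

Definition Kx := (dy * dz) *: (tI R nz.+1 *t (tI R ny.+1 *t L nx)).
Definition Ky := (dx * dz) *: (tI R nz.+1 *t (L ny *t tI R nx.+1)).
Definition Kz := (dx * dy) *: (L nz *t (tI R ny.+1 *t tI R nx.+1)).

Definition Dli :=
  block_mx (dx^-1 *: (1%:M : 'M[R]_(nz.+1 * (ny.+1 * nx)))) 0 0
   (block_mx (dy^-1 *: (1%:M : 'M[R]_(nz.+1 * (ny * nx.+1)))) 0 0
             (dz^-1 *: (1%:M : 'M[R]_(nz * (ny.+1 * nx.+1))))).

Lemma invDl : invmx (@Dl R dx dy dz nx ny nz) = Dli.
Proof.
have e : @Dl R dx dy dz nx ny nz *m Dli = 1%:M.
  rewrite /Dl /Dli mulmx_block !mulmx0 !mul0mx !addr0 !add0r mulmx_block.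
  rewrite !mulmx0 !mul0mx !addr0 !add0r -!scalemxAl -!scalemxAr !mul1mx !scalerA.
  by rewrite !divff ?gt_eqF // !scale1r -!scalar_mx_block.
have u : @Dl R dx dy dz nx ny nz \in unitmx by case/mulmx1_unit: e.
by rewrite -[RHS]mul1mx -(mulVmx u) -mulmxA e mulmx1.
Qed.

Lemma trmxN' p q (A : 'M[R]_(p, q)) : (- A)^T = - A^T.
Proof. by apply/matrixP => i j; rewrite !mxE. Qed.

Lemma K_eq : @D R nx ny nz *m @DS R dx dy dz nx ny nz *m invmx (@Dl R dx dy dz nx ny nz)
   *m (@D R nx ny nz)^T = dx^-1 *: Kx + (dy^-1 *: Ky + dz^-1 *: Kz).
Proof.
rewrite invDl /D /DS /Dli.
rewrite mul_row_block !mulmx0 !addr0 !add0r mul_row_block !mulmx0 !addr0 !add0r.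
rewrite mul_row_block !mulmx0 !addr0 !add0r mul_row_block !mulmx0 !addr0 !add0r.
rewrite tr_row_mx tr_row_mx mul_row_col mul_row_col.
rewrite /Dx /Dy /Dz !trmxN' !trmx_tens !trmx1 !trmxK !mulNmx !mulmxN !opprK.
rewrite -!scalemxAr -!scalemxAl !mulmx1 !(@tensmx_mul R) !mul1mx !mulmx1.
by [].
Qed.

Local Notation N := (nz.+1 * (ny.+1 * nx.+1))%N.
Definition jz (j : 'I_N) : 'I_nz.+1 := (mxtens_unindex j).1.
Definition jy (j : 'I_N) : 'I_ny.+1 := (mxtens_unindex (mxtens_unindex j).2).1.
Definition jx (j : 'I_N) : 'I_nx.+1 := (mxtens_unindex (mxtens_unindex j).2).2.
Definition tt3 (j : 'I_N) := tw R (jz j) * (tw R (jy j) * tw R (jx j)).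

Lemma tt3_gt0 j : 0 < tt3 j.
Proof. by rewrite /tt3 !mulr_gt0 // tw_gt0. Qed.

Lemma unindex_neq p q (a b : 'I_(p * q)) : a != b ->
  ((mxtens_unindex a).1 != (mxtens_unindex b).1) || ((mxtens_unindex a).2 != (mxtens_unindex b).2).
Proof.
move=> ne; apply: contraR ne; rewrite negb_or !negbK => /andP[/eqP e1 /eqP e2]; apply/eqP.
rewrite -[a]mxtens_unindexK -[b]mxtens_unindexK; congr mxtens_index.
by move: e1 e2; case: (mxtens_unindex a); case: (mxtens_unindex b) => /= ? ? ? ? -> ->.
Qed.

Lemma DV_entry i j : @DV R dx dy dz nx ny nz i j = (dx * dy * dz * tt3 i) *+ (i == j).
Proof.
rewrite /DV /tt3 /jz /jy /jx /tw !mxE.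
have [<-|ne] := eqVneq i j; first by rewrite !eqxx !mulr1n.
rewrite mulr0n; case/orP: (unindex_neq ne) => [/negPf -> |]; first by rewrite mulr0n mul0r mulr0.
move=> ne2; case/orP: (unindex_neq ne2) => [/negPf -> | /negPf ->];
  by rewrite mulr0n ?mul0r ?mulr0.
Qed.

Lemma DV_pos j : 0 < @DV R dx dy dz nx ny nz j j.
Proof. by rewrite DV_entry eqxx mulr1n; apply: mulr_gt0; [rewrite !mulr_gt0 | exact: tt3_gt0]. Qed.

Lemma colsum_DV j : colsum (@DV R dx dy dz nx ny nz) j = @DV R dx dy dz nx ny nz j j.
Proof.
rewrite DV_entry eqxx mulr1n /DV colsumZ !colsum_tens !colsum_tI ger0_norm.
  by rewrite /tt3.
by rewrite !mulr_ge0 // ltW.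
Qed.

Definition Ksum := dx^-1 *: Kx + (dy^-1 *: Ky + dz^-1 *: Kz).

Lemma colsum_K j : colsum Ksum j <=
  4%:R * @DV R dx dy dz nx ny nz j j * ((dx ^+ 2)^-1 + (dy ^+ 2)^-1 + (dz ^+ 2)^-1).
Proof.
rewrite DV_entry eqxx mulr1n /tt3.
have tz := tw_gt0 R (jz j); have ty := tw_gt0 R (jy j); have tx := tw_gt0 R (jx j).
apply: le_trans (colsumD _ _ _) _; apply: le_trans (lerD (lexx _) (colsumD _ _ _)) _.
rewrite (colsumZ (dx^-1) Kx) (colsumZ (dy^-1) Ky) (colsumZ (dz^-1) Kz).
rewrite /Kx /Ky /Kz (colsumZ (dy * dz)) (colsumZ (dx * dz)) (colsumZ (dx * dy)).
rewrite !colsum_tens !colsum_tI.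

have hx0 := ltW hx; have hy0 := ltW hy; have hz0 := ltW hz.
rewrite !ger0_norm ?invr_ge0 ?mulr_ge0 //.
have Lx := colsumL R (mxtens_unindex (mxtens_unindex j).2).2 px.
have Ly := colsumL R (mxtens_unindex (mxtens_unindex j).2).1 py.
have Lz := colsumL R (mxtens_unindex j).1 pz.
rewrite /jx /jy /jz in tx ty tz *.
set a := tw R _ in tz Lz *; set b := tw R _ in ty Ly *; set c := tw R _ in tx Lx *.
set lx := colsum _ _ in Lx *; set ly := colsum _ _ in Ly *; set lz := colsum _ _ in Lz *.
have e : 4%:R * (dx * dy * dz * (a * (b * c))) * ((dx ^+ 2)^-1 + (dy ^+ 2)^-1 + (dz ^+ 2)^-1)
  = dx^-1 * (dy * dz * (a * (b * (4%:R * c)))) + (dy^-1 * (dx * dz * (a * ((4%:R * b) * c)))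
     + dz^-1 * (dx * dy * ((4%:R * a) * (b * c)))).
  by field; rewrite !gt_eqF.
rewrite e; apply: lerD; last apply: lerD.
- by rewrite ler_wpM2l ?invr_ge0 // ler_wpM2l ?mulr_ge0 // ler_wpM2l ?(ltW tz) // ler_wpM2l ?(ltW ty).
- by rewrite ler_wpM2l ?invr_ge0 // ler_wpM2l ?mulr_ge0 // ler_wpM2l ?(ltW tz) // ler_wpM2r ?(ltW tx).
- by rewrite ler_wpM2l ?invr_ge0 // ler_wpM2l ?mulr_ge0 // ler_wpM2r ?mulr_ge0 ?(ltW tx) ?(ltW ty).
Qed.

Local Notation DVm := (@DV R dx dy dz nx ny nz).
Local Notation Sm := (@DVmhalf R dx dy dz nx ny nz).
Local Notation Hm := (@H R hbar m dx dy dz nx ny nz U).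
Local Notation DUm := (@DU R nx ny nz U).

Definition sv := \row_(a < N) (Num.sqrt (DVm a a))^-1.
Definition ev := \row_(a < N) (DVm a a)^-1.

Lemma S_diag : Sm = diag_mx sv.
Proof.
apply/matrixP => a b; rewrite /DVmhalf !mxE.
by case: eqP => [->|]; rewrite ?mulr1n ?mulr0n.
Qed.

Lemma SS : Sm *m Sm = diag_mx ev.
Proof.
have svE b : sv 0 b = (Num.sqrt (DVm b b))^-1 by rewrite /sv mxE.
have evE b : ev 0 b = (DVm b b)^-1 by rewrite /ev mxE.
rewrite S_diag mulmx_diag; congr diag_mx; apply/rowP => b; rewrite [LHS]mxE svE evE.
by rewrite -invfM -expr2 (sqr_sqrtr (ltW (DV_pos b))).
Qed.

Lemma S_unit : Sm \in unitmx.
Proof.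
rewrite S_diag unitmxE det_diag unitfE; apply/prodf_neq0 => a _.
by rewrite /sv [sv 0 a]mxE invr_eq0 sqrtr_eq0 -ltNge DV_pos.
Qed.

Lemma mxdiag_entry p q (A : 'M[R]_(p, q)) (d : 'rV_q) i j :
  (A *m diag_mx d) i j = A i j * d 0 j.
Proof. by rewrite mul_mx_diag mxE. Qed.

Lemma diagmx_entry p q (A : 'M[R]_(p, q)) (d : 'rV_p) i j :
  (diag_mx d *m A) i j = d 0 i * A i j.
Proof. by rewrite mul_diag_mx mxE. Qed.

Lemma evE b : ev 0 b = (DVm b b)^-1.
Proof. by rewrite /ev mxE. Qed.

Lemma svE b : sv 0 b = (Num.sqrt (DVm b b))^-1.
Proof. by rewrite /sv mxE. Qed.

Definition cc := hbar ^+ 2 / (2%:R * m).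

Lemma H_eq : Hm = cc *: Ksum + DVm *m DUm.
Proof. by rewrite /H K_eq. Qed.

Definition Bm := hbar^-1 *: (Hm *m diag_mx ev).
Definition Am := hbar^-1 *: (Sm *m Hm *m Sm).

Lemma AS : Am *m Sm = Sm *m Bm.
Proof. by rewrite /Am /Bm -scalemxAl -scalemxAr -SS !mulmxA. Qed.

Definition beta := (2%:R * hbar / m) * (dx ^+ 2)^-1 + (2%:R * hbar / m) * (dy ^+ 2)^-1
          + (2%:R * hbar / m) * (dz ^+ 2)^-1 + maxU U / hbar.

Lemma U_le a b c : `|U a b c| <= maxU U.
Proof.
rewrite /maxU.
apply: le_trans (le_bigmax _ _ a).
apply: le_trans (le_bigmax _ _ b).
exact: (le_bigmax _ _ c).
Qed.

Lemma DU_le j : `|DUm j j| <= maxU U.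
Proof. by rewrite /DU !mxE eqxx mulr1n U_le. Qed.

Lemma maxU_ge0 : 0 <= maxU U.
Proof. exact: le_trans (normr_ge0 _) (U_le ord0 ord0 ord0). Qed.

Lemma colsum_DVDU j : colsum (DVm *m DUm) j = DVm j j * `|DUm j j|.
Proof.
rewrite /DU mul_mx_diag -colsum_DV /colsum mulr_suml; apply: eq_bigr => i _.
by rewrite !mxE eqxx mulr1n normrM.
Qed.

Lemma colsum_B j : colsum Bm j <= beta.
Proof.
have dv := DV_pos j; have dv0 := ltW dv; have hh0 := ltW hh.
have hc : 0 < cc by rewrite /cc divr_gt0 ?exprn_gt0 ?mulr_gt0.
have e1 : colsum Bm j = hbar^-1 * ((DVm j j)^-1 * colsum Hm j).
  rewrite /Bm (colsumZ (hbar^-1)) ger0_norm ?invr_ge0 //.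
  have -> // : colsum (Hm *m diag_mx ev) j = (DVm j j)^-1 * colsum Hm j.
  rewrite /colsum mulr_sumr; apply: eq_bigr => i _.
  rewrite mxdiag_entry evE normrM.
  by rewrite [`|_^-1|]ger0_norm ?invr_ge0 // mulrC.
have e2 : colsum Hm j <= cc * colsum Ksum j + DVm j j * `|DUm j j|.
  rewrite H_eq; apply: le_trans (colsumD _ _ _) _.
  by rewrite (colsumZ cc) (ger0_norm (ltW hc)) colsum_DVDU.
rewrite e1.
apply: (@le_trans _ _ (hbar^-1 * ((DVm j j)^-1 * (cc * (4%:R * DVm j j *
   ((dx ^+ 2)^-1 + (dy ^+ 2)^-1 + (dz ^+ 2)^-1)) + DVm j j * maxU U)))).
  rewrite ler_wpM2l ?invr_ge0 // ler_wpM2l ?invr_ge0 //.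
  apply: le_trans e2 _; apply: lerD.
    by apply: ler_wpM2l; [exact: ltW hc | exact: colsum_K].
  by apply: ler_wpM2l; [exact: dv0 | exact: DU_le].
rewrite le_eqVlt; apply/orP; left; apply/eqP.
rewrite /beta /cc; field.
by rewrite !gt_eqF.
Qed.

Lemma trE p q (A : 'M[R]_(p, q)) i j : A^T i j = A j i.
Proof. by rewrite mxE. Qed.
Lemma addE p q (A B : 'M[R]_(p, q)) i j : (A + B) i j = A i j + B i j.
Proof. by rewrite mxE. Qed.
Lemma sclE p q c (A : 'M[R]_(p, q)) i j : (c *: A) i j = c * A i j.
Proof. by rewrite mxE. Qed.
Lemma trmxD' p q (A B : 'M[R]_(p, q)) : (A + B)^T = A^T + B^T.
Proof. by apply/matrixP => i j; rewrite !mxE. Qed.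
Lemma trmxZ' p q c (A : 'M[R]_(p, q)) : (c *: A)^T = c *: A^T.
Proof. by apply/matrixP => i j; rewrite !mxE. Qed.

Lemma L_sym p : (L p)^T = L p.
Proof. by rewrite trmx_mul trmxK. Qed.

Lemma Kx_sym : Kx^T = Kx.
Proof. by rewrite /Kx trmxZ' !trmx_tens !tI_sym L_sym. Qed.
Lemma Ky_sym : Ky^T = Ky.
Proof. by rewrite /Ky trmxZ' !trmx_tens !tI_sym L_sym. Qed.
Lemma Kz_sym : Kz^T = Kz.
Proof. by rewrite /Kz trmxZ' !trmx_tens !tI_sym L_sym. Qed.

Lemma sym3 p (A B C : 'M[R]_p) a b c : A^T = A -> B^T = B -> C^T = C ->
  (a *: A + (b *: B + c *: C))^T = a *: A + (b *: B + c *: C).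
Proof. by move=> hA hB hC; rewrite !trmxD' !trmxZ' hA hB hC. Qed.

Lemma Ksum_sym : Ksum^T = Ksum.
Proof.
exact: (sym3 _ _ _ Kx_sym Ky_sym Kz_sym).
Qed.

Lemma DV_sym : DVm^T = DVm.
Proof.
apply/matrixP => i j; rewrite trE !DV_entry.
have [->|ne] := eqVneq i j; first by [].
by rewrite !mulr0n.
Qed.

Lemma DUDV : DUm *m DVm = DVm *m DUm.
Proof.
apply/matrixP => i j; rewrite /DU diagmx_entry mxdiag_entry !DV_entry.
have [->|ne] := eqVneq i j; first by rewrite mulrC.
by rewrite !mulr0n mulr0 mul0r.
Qed.

Lemma H_sym : Hm^T = Hm.
Proof.
by rewrite H_eq trmxD' trmxZ' Ksum_sym trmx_mul /DU tr_diag_mx DV_sym -/(DUm) DUDV.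
Qed.

Lemma A_sym : Am^T = Am.
Proof.
by rewrite /Am trmxZ' !trmx_mul S_diag tr_diag_mx H_sym mulmxA.
Qed.

Definition i1 : 'I_nx.+1 := Ordinal (px : (1 < nx.+1)%N).
Definition aa : 'I_N := mxtens_index (ord0, mxtens_index (ord0, ord0)).
Definition bb : 'I_N := mxtens_index (ord0, mxtens_index (ord0, i1)).

Lemma L01 : L nx ord0 i1 = -1.
Proof.
rewrite mxE (eq_bigr (fun k : 'I_nx => - (((k : nat) == 0%N)%:R : R))) => [|k _].
  by rewrite sumrN sum_ind px.
rewrite trE !WE /=.
by case: (k : nat) => [|k'] /=; rewrite ?subrr ?sub0r ?subr0 ?mulr1 ?mul0r ?oppr0.
Qed.

Lemma aa_bb : aa != bb.
Proof. by apply/eqP => /(congr1 val) /=; rewrite !mul0n. Qed.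

Lemma A_neq0 : Am != 0.
Proof.
apply/eqP => /matrixP /(_ aa bb) /eqP; rewrite /Am sclE [(0 : 'M[R]_N) aa bb]mxE.
rewrite S_diag mxdiag_entry diagmx_entry !svE.
rewrite !mulf_eq0 !invr_eq0 !sqrtr_eq0 (lt_geF (DV_pos aa)) (lt_geF (DV_pos bb)) (gt_eqF hh) /= orbF.
rewrite H_eq addE /DU mxdiag_entry DV_entry (negPf aa_bb) mulr0n mul0r addr0.
rewrite (sclE cc Ksum) mulf_eq0 gt_eqF /=; last by rewrite /cc divr_gt0 ?exprn_gt0 ?mulr_gt0.
rewrite /Ksum !addE (sclE _ Kx) (sclE _ Ky) (sclE _ Kz) /Kx /Ky /Kz.
rewrite (sclE (dy * dz)) (sclE (dx * dz)) (sclE (dx * dy)) /aa /bb !tensmxE !tIE L01 /=.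
rewrite !mulr0n !mulr0 !addr0 !mulr1n.
by rewrite !mulf_eq0 !invr_eq0 !oppr_eq0 oner_eq0 !gt_eqF ?tw_gt0.
Qed.

Lemma beta_gt0 : 0 < beta.
Proof.
have h2 : 0 < 2%:R * hbar / m by rewrite divr_gt0 ?mulr_gt0.
rewrite /beta; apply: ltr_wpDr; first by rewrite divr_ge0 ?maxU_ge0 ?ltW.
by rewrite !addr_gt0 // mulr_gt0 // invr_gt0 exprn_gt0.
Qed.

Lemma main_ineq : dt_CFL hbar m dx dy dz U <= dt_CFL_gen hbar m dx dy dz U.
Proof.
have rpos : 0 < spectral_radius Am := @specrad_pos R _ Am A_sym A_neq0.
have rle : spectral_radius Am <= beta := @specrad_le R _ Am Bm Sm beta S_unit AS colsum_B (ltW beta_gt0).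
change (2%:R / beta <= 2%:R / spectral_radius Am).
rewrite ler_wpM2l // lef_pV2 //; exact: beta_gt0.
Qed.
End Main.

Theorem theorem2 (R : rcfType) (hbar m dx dy dz : R) (nx ny nz : nat)
  (U : 'I_nx.+1 -> 'I_ny.+1 -> 'I_nz.+1 -> R) :
  0 < hbar -> 0 < m -> 0 < dx -> 0 < dy -> 0 < dz ->
  (0 < nx)%N -> (0 < ny)%N -> (0 < nz)%N ->
  dt_CFL hbar m dx dy dz U <= dt_CFL_gen hbar m dx dy dz U.
Proof.
move=> hh hm hx hy hz px py pz.
exact: main_ineq.
Qed.
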